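(* There exist Polish spaces $I_X, I_Y \subseteq \mathbb{C}$, a base $\mathcal{B}$ of $I_X$ consisting of clopen sets, and a continuous, open surjection $f : I_X \to I_Y$ such that $f(B)$ is clopen in $I_Y$ for every $B \in \mathcal{B}$, but $f$ is not closed--$F_\sigma$, i.e. there is a closed set $F \subseteq I_X$ such that $f(F)$ is not an $F_\sigma$ subset of $I_Y$.
   Context: A function is closed--$F_\sigma$ if it maps every closed set to an $F_\sigma$ set (a countable union of closed sets). *)

(* Defs.v *)
(* classical reals; the complex plane is modelled as R * R
   with the Euclidean metric. Subsets are predicates Cplx -> Prop, carrying
   the subspace topology. *)
From Stdlib Require Import Reals.
Open Scope R_scope.

Definition Cplx : Type := (R * R)%type.

Definition cdist (p q : Cplx) : R :=
  sqrt ((fst p - fst q)^2 + (snd p - snd q)^2).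

Definition subset (A B : Cplx -> Prop) : Prop := forall x, A x -> B x.

Definition open_in (S U : Cplx -> Prop) : Prop :=
  subset U S /\
  forall x, U x -> exists eps, eps > 0 /\
    forall y, S y -> cdist x y < eps -> U y.

Definition closed_in (S F : Cplx -> Prop) : Prop :=
  subset F S /\ open_in S (fun x => S x /\ ~ F x).

Definition clopen_in (S U : Cplx -> Prop) : Prop := open_in S U /\ closed_in S U.

Definition Fsigma_in (S A : Cplx -> Prop) : Prop :=
  exists Fn : nat -> (Cplx -> Prop),
    (forall n, closed_in S (Fn n)) /\
    forall x, A x <-> exists n, Fn n x.

Definition is_metric_on (S : Cplx -> Prop) (d : Cplx -> Cplx -> R) : Prop :=
  (forall x y, S x -> S y -> 0 <= d x y) /\
  (forall x y, S x -> S y -> (d x y = 0 <-> x = y)) /\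
  (forall x y, S x -> S y -> d x y = d y x) /\
  (forall x y z, S x -> S y -> S z -> d x z <= d x y + d y z).

Definition metric_compatible (S : Cplx -> Prop) (d : Cplx -> Cplx -> R) : Prop :=
  forall U, subset U S ->
    (open_in S U <->
     forall x, U x -> exists r, r > 0 /\ forall y, S y -> d x y < r -> U y).

Definition metric_complete (S : Cplx -> Prop) (d : Cplx -> Cplx -> R) : Prop :=
  forall u : nat -> Cplx, (forall n, S (u n)) ->
    (forall eps, eps > 0 -> exists N, forall m n,
        (m >= N)%nat -> (n >= N)%nat -> d (u m) (u n) < eps) ->
    exists l, S l /\
      forall eps, eps > 0 -> exists N, forall n, (n >= N)%nat -> d (u n) l < eps.

Definition separable_in (S : Cplx -> Prop) : Prop :=
  exists D : nat -> Cplx, (forall n, S (D n)) /\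
    forall U, open_in S U -> (exists x, U x) -> exists n, U (D n).

Definition polish (S : Cplx -> Prop) : Prop :=
  separable_in S /\
  exists d, is_metric_on S d /\ metric_compatible S d /\ metric_complete S d.

Definition is_base (S : Cplx -> Prop) (Bs : (Cplx -> Prop) -> Prop) : Prop :=
  (forall B, Bs B -> open_in S B) /\
  forall U x, open_in S U -> U x -> exists B, Bs B /\ B x /\ subset B U.

Definition image (f : Cplx -> Cplx) (A : Cplx -> Prop) : Cplx -> Prop :=
  fun y => exists x, A x /\ f x = y.

Definition maps_into (f : Cplx -> Cplx) (X Y : Cplx -> Prop) : Prop :=
  forall x, X x -> Y (f x).

Definition continuous_on (f : Cplx -> Cplx) (X Y : Cplx -> Prop) : Prop :=
  forall V, open_in Y V -> open_in X (fun x => X x /\ V (f x)).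

Definition open_map_on (f : Cplx -> Cplx) (X Y : Cplx -> Prop) : Prop :=
  forall U, open_in X U -> open_in Y (image f U).

Definition surjective_onto (f : Cplx -> Cplx) (X Y : Cplx -> Prop) : Prop :=
  forall y, Y y -> exists x, X x /\ f x = y.

(* Main.v *)
Require Import Defs.
From Stdlib Require Import Reals Lra Lia ClassicalEpsilon Classical FunctionalExtensionality Cantor.
From Stdlib Require Import PropExtensionality.
From Stdlib Require Import ZArith.
Open Scope R_scope.

Definition code := nat -> bool.
Definition b2r (x : bool) : R := if x then 1 else 0.
Definition shift (a : code) : code := fun k => a (S k).

Fixpoint ps (n : nat) (a : code) : R :=
  match n with O => 0 | S n => (2 * b2r (a O) + ps n (shift a)) / 3 end.

Lemma b2r_bnd x : 0 <= b2r x <= 1.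
Proof. destruct x; simpl; lra. Qed.

Lemma ps_bnd n : forall a, 0 <= ps n a <= 1.
Proof. induction n; intro a; simpl. lra. pose proof (b2r_bnd (a O)); pose proof (IHn (shift a)); lra. Qed.

Lemma ps_mono n : forall a, ps n a <= ps (S n) a.
Proof. induction n; intro a. simpl. pose proof (b2r_bnd (a O)); lra.
 change (ps (S n) a <= (2 * b2r (a O) + ps (S n) (shift a)) / 3).
 pose proof (IHn (shift a)); change (ps (S n) a) with ((2*b2r (a O) + ps n (shift a))/3). lra. Qed.

Definition c (a : code) : R.
Proof.
 refine (proj1_sig (growing_cv (fun n => ps n a) _ _)).
 - intro n; apply ps_mono.
 - unfold has_ub, bound, is_upper_bound, EUn. exists 1; intros x [n ->]; apply ps_bnd.
Defined.

Lemma c_cv a : Un_cv (fun n => ps n a) (c a).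
Proof. unfold c; destruct growing_cv; simpl; auto. Qed.

Lemma c_bnd a : 0 <= c a <= 1.
Proof.
 split.
 - pose proof (growing_ineq (fun n => ps n a) (c a) (fun n => ps_mono n a) (c_cv a) 0). simpl in H; lra.
 - destruct (Rle_dec (c a) 1) as [h|h]; auto.
   destruct (c_cv a (c a - 1)) as [N HN]; [lra|].
   specialize (HN N (le_n _)). unfold R_dist in HN. pose proof (ps_bnd N a).
   rewrite Rabs_left1 in HN; lra.
Qed.

Lemma c_eq a : c a = (2 * b2r (a O) + c (shift a)) / 3.
Proof.
 apply (UL_sequence (fun n => ps (S n) a)).
 - intros e He; destruct (c_cv a e He) as [N HN]; exists N; intros n Hn; apply HN; lia.
 - intros e He; destruct (c_cv (shift a) e He) as [N HN]; exists N; intros n Hn.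
   specialize (HN n Hn). unfold R_dist in *. simpl.
   replace ((2 * b2r (a 0%nat) + ps n (shift a)) / 3 - (2 * b2r (a 0%nat) + c (shift a)) / 3)
     with ((ps n (shift a) - c (shift a)) / 3) by field.
   unfold Rdiv; rewrite Rabs_mult, (Rabs_right (/3)) by (apply Rle_ge, Rlt_le, Rinv_0_lt_compat; lra).
   assert (0 < /3) by lra. nra.
Qed.

Definition agree (a b : code) (n : nat) : Prop := forall k, (k < n)%nat -> a k = b k.

Lemma E1 n : forall a b, agree a b n -> Rabs (c a - c b) <= (/3)^n.
Proof.
 induction n; intros a b H; simpl.
 - pose proof (c_bnd a); pose proof (c_bnd b). apply Rabs_le; lra.
 - rewrite (c_eq a), (c_eq b), (H O ltac:(lia)).
   assert (Hs : agree (shift a) (shift b) n) by (intros k Hk; apply H; lia).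
   specialize (IHn _ _ Hs).
   replace ((2 * b2r (b 0%nat) + c (shift a)) / 3 - (2 * b2r (b 0%nat) + c (shift b)) / 3)
     with ((c (shift a) - c (shift b)) * /3) by field.
   rewrite Rabs_mult, (Rabs_right (/3)) by (apply Rle_ge, Rlt_le, Rinv_0_lt_compat; lra). lra.
Qed.

Lemma E2 n : forall a b, ~ agree a b n -> (/3)^n <= Rabs (c a - c b).
Proof.
 induction n; intros a b H; simpl.
 - exfalso; apply H; intros k Hk; lia.
 - rewrite (c_eq a), (c_eq b).
   destruct (Bool.bool_dec (a O) (b O)) as [e|e].
   + rewrite e.
     assert (Hs : ~ agree (shift a) (shift b) n).
     { intro Hs; apply H; intros [|k] Hk; auto. apply Hs; lia. }
     specialize (IHn _ _ Hs).
     replace ((2 * b2r (b 0%nat) + c (shift a)) / 3 - (2 * b2r (b 0%nat) + c (shift b)) / 3)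
       with ((c (shift a) - c (shift b)) * /3) by field.
     rewrite Rabs_mult, (Rabs_right (/3)) by (apply Rle_ge, Rlt_le, Rinv_0_lt_compat; lra). lra.
   + assert ((/3)^n <= 1). { clear; induction n; simpl; lra. }
     pose proof (c_bnd (shift a)); pose proof (c_bnd (shift b)).
     assert (h3 : /3 * (/3)^n <= 1/3).
     { replace (1/3) with (/3 * 1) by field. apply Rmult_le_compat_l; [|auto].
       apply Rlt_le, Rinv_0_lt_compat; lra. }
     destruct (a O), (b O); try congruence; simpl; unfold Rabs; destruct Rcase_abs; lra.
Qed.

Definition zero : code := fun _ => false.
Lemma c_zero : c zero = 0.
Proof. pose proof (c_eq zero). change (shift zero) with zero in H. simpl in H. lra. Qed.

Lemma pow3_pos n : 0 < (/3)^n.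
Proof. apply pow_lt; apply Rinv_0_lt_compat; lra. Qed.

Lemma c_inj a b : c a = c b -> a = b.
Proof.
 intro H; apply functional_extensionality; intro k.
 destruct (classic (agree a b (S k))) as [h|h]. apply h; lia.
 pose proof (E2 _ _ _ h). rewrite H, Rminus_diag, Rabs_R0 in H0. pose proof (pow3_pos (S k)); lra.
Qed.

Lemma agree_all a b : (forall n, agree a b n) -> a = b.
Proof. intro H; apply functional_extensionality; intro k; apply (H (S k)); lia. Qed.

Definition hp (n : nat) : R := / 2 ^ n.
Lemma hp_pos n : 0 < hp n.
Proof. unfold hp; apply Rinv_0_lt_compat, pow_lt; lra. Qed.
Lemma hp_le_iff m n : hp m <= hp n <-> (n <= m)%nat.
Proof.
 unfold hp; split; intro H.
 - destruct (Compare_dec.le_lt_dec n m) as [h|h]; auto. exfalso.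
   assert (2^m < 2^n) by (apply Rlt_pow; [lra|lia]).
   assert (0 < 2^m) by (apply pow_lt; lra).
   apply Rinv_lt_contravar in H0; [lra|nra].
 - apply Rinv_le_contravar. apply pow_lt; lra. apply Rle_pow; [lra|lia].
Qed.
Lemma pow3_le_hp n : (/3)^n <= hp n.
Proof. unfold hp. rewrite <- pow_inv. apply pow_incr. split. apply Rlt_le, Rinv_0_lt_compat; lra.
 apply Rinv_le_contravar; lra. Qed.
Lemma INR_le_pow2 n : INR n <= 2 ^ n.
Proof. induction n. simpl; lra. rewrite S_INR; simpl. assert (1 <= 2^n) by (apply pow_R1_Rle; lra). lra. Qed.
Lemma hp_small r : 0 < r -> exists n, hp n < r.
Proof.
 intro Hr. destruct (archimed (/r)) as [h1 _].
 assert (0 < /r) by (apply Rinv_0_lt_compat; lra).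
 assert (0 <= IZR (up (/r))) by lra. apply le_IZR in H0.
 set (N := Z.to_nat (up (/r))).
 exists N.
 pose proof (INR_le_pow2 N). unfold N in H1 at 1. rewrite INR_IZR_INZ, Z2Nat.id in H1 by lia.
 unfold hp. assert (0 < 2 ^ N) by lra.
 rewrite <- (Rinv_inv r). apply Rinv_lt_contravar; [apply Rmult_lt_0_compat; lra | lra].
Qed.

Definition downc (Q : nat -> Prop) := Q O /\ forall j, Q (S j) -> Q j.

Definition dist (Q : nat -> Prop) : R :=
  match excluded_middle_informative (forall j, Q j) with
  | left _ => 0
  | right _ => hp (epsilon (inhabits O) (fun j => Q j /\ ~ Q (S j)))
  end.

Lemma downc_le Q : downc Q -> forall i j, (i <= j)%nat -> Q j -> Q i.
Proof. intros [_ H] i j Hij; induction Hij; auto. Qed.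

Lemma dist_cases Q : downc Q -> (dist Q = 0 /\ forall j, Q j) \/
   exists J, dist Q = hp J /\ forall j, Q j <-> (j <= J)%nat.
Proof.
 intro D. unfold dist. destruct excluded_middle_informative as [h|h]; [left; auto|right].
 assert (ex : exists J, Q J /\ ~ Q (S J)).
 { apply not_all_ex_not in h. destruct h as [m hm]. induction m.
   - exfalso; apply hm; destruct D; auto.
   - destruct (classic (Q m)); eauto. }
 pose proof (epsilon_spec (inhabits O) _ ex) as [h1 h2].
 set (J := epsilon _ _) in *. exists J; split; auto.
 intro j; split; intro Hj.
 - destruct (Compare_dec.le_lt_dec j J); auto. exfalso; apply h2; apply (downc_le Q D _ j); auto.
 - apply (downc_le Q D _ J); auto.
Qed.

Lemma dist_spec Q : downc Q -> forall j, dist Q <= hp j <-> Q j.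
Proof.
 intros D j. destruct (dist_cases Q D) as [[h1 h2]|[J [h1 h2]]].
 - rewrite h1; split; auto; intros _; apply Rlt_le, hp_pos.
 - rewrite h1, h2, hp_le_iff; tauto.
Qed.

Lemma dist_nonneg Q : downc Q -> 0 <= dist Q.
Proof. intro D; destruct (dist_cases Q D) as [[h1 h2]|[J [h1 h2]]]; rewrite h1; [lra|apply Rlt_le, hp_pos]. Qed.

Lemma dist_zero Q : downc Q -> (dist Q = 0 <-> forall j, Q j).
Proof.
 intro D; destruct (dist_cases Q D) as [[h1 h2]|[J [h1 h2]]]; rewrite h1; split; auto.
 intro h; pose proof (hp_pos J); lra.
 intro h. specialize (h (S J)). apply h2 in h. lia.
Qed.

Lemma dist_lt Q j : downc Q -> dist Q < hp j -> Q j.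
Proof. intros D h; apply dist_spec; auto; lra. Qed.

Lemma dist_ultra Q1 Q2 Q3 : downc Q1 -> downc Q2 -> downc Q3 ->
  (forall j, Q1 j -> Q2 j -> Q3 j) -> dist Q3 <= dist Q1 + dist Q2.
Proof.
 intros D1 D2 D3 H.
 pose proof (dist_nonneg _ D1); pose proof (dist_nonneg _ D2).
 destruct (dist_cases Q1 D1) as [[a1 a2]|[J1 [a1 a2]]];
 destruct (dist_cases Q2 D2) as [[b1 b2]|[J2 [b1 b2]]].
 - assert (dist Q3 = 0) by (apply dist_zero; auto). lra.
 - assert (dist Q3 <= hp J2) by (apply dist_spec; auto; apply H; auto; apply b2; lia). lra.
 - assert (dist Q3 <= hp J1) by (apply dist_spec; auto; apply H; auto; apply a2; lia). lra.
 - destruct (Nat.le_ge_cases J1 J2).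
   + assert (dist Q3 <= hp J1) by (apply dist_spec; auto; apply H; [apply a2|apply b2]; lia). lra.
   + assert (dist Q3 <= hp J2) by (apply dist_spec; auto; apply H; [apply a2|apply b2]; lia). lra.
Qed.

Lemma dist_ext Q1 Q2 : (forall j, Q1 j <-> Q2 j) -> dist Q1 = dist Q2.
Proof. intro H. assert (Q1 = Q2) by (apply functional_extensionality; intro j; apply propositional_extensionality; auto). now subst. Qed.

Fixpoint cnt (b : code) (n : nat) : nat :=
  match n with O => O | S n => (cnt b n + (if b n then 1 else 0))%nat end.
Definition inf (b : code) : Prop := forall j, exists n, (j <= cnt b n)%nat.
Definition QZ (b b' : code) (j : nat) : Prop :=
  b = b' \/ exists n, (j <= cnt b n)%nat /\ agree b b' n.

Lemma cnt_le b n : (cnt b n <= n)%nat.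
Proof. induction n; simpl; [lia|destruct (b n); lia]. Qed.
Lemma cnt_mono b n m : (n <= m)%nat -> (cnt b n <= cnt b m)%nat.
Proof. induction 1; simpl; [lia|destruct (b m); lia]. Qed.
Lemma agree_le a b n m : agree a b n -> (m <= n)%nat -> agree a b m.
Proof. intros H h k hk; apply H; lia. Qed.
Lemma agree_sym a b n : agree a b n -> agree b a n.
Proof. intros H k hk; symmetry; auto. Qed.
Lemma agree_trans a b e n : agree a b n -> agree b e n -> agree a e n.
Proof. intros H1 H2 k hk; rewrite H1; auto. Qed.
Lemma agree_refl a n : agree a a n.
Proof. intros k _; auto. Qed.
Lemma agree_cnt b b' n : agree b b' n -> cnt b n = cnt b' n.
Proof. induction n; intro H; simpl; auto. rewrite IHn by (apply (agree_le _ _ (S n)); auto).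
 rewrite (H n) by lia; auto. Qed.
Lemma downc_agree a b : downc (agree a b).
Proof. split. intros k h; lia. intros j H; apply (agree_le _ _ (S j)); auto. Qed.
Lemma downc_QZ b b' : downc (QZ b b').
Proof. split. right; exists O; split; [lia|intros k h; lia].
 intros j [h|[n [h1 h2]]]; [left; auto|right; exists n; split; auto; lia]. Qed.
Lemma QZ_sym b b' j : QZ b b' j -> QZ b' b j.
Proof. intros [h|[n [h1 h2]]]; [left; auto|right; exists n; split].
 rewrite <- (agree_cnt _ _ _ h2); auto. apply agree_sym; auto. Qed.
Lemma QZ_trans b b' b'' j : QZ b b' j -> QZ b' b'' j -> QZ b b'' j.
Proof.
 intros [h|[n1 [h1 h2]]] H2; [subst; auto|].
 destruct H2 as [h|[n2 [g1 g2]]]; [subst; right; eauto|].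
 right. destruct (Nat.le_ge_cases n1 n2).
 - exists n1; split; auto. apply (agree_trans _ b'); auto. apply (agree_le _ _ n2); auto.
 - exists n2; split.
   + rewrite (agree_cnt b b' n2); auto. apply (agree_le _ _ n1); auto.
   + apply (agree_trans _ b'); auto. apply (agree_le _ _ n1); auto.
Qed.
Lemma QZ_agree b b' j : QZ b b' j -> agree b b' j.
Proof. intros [h|[n [h1 h2]]]; [subst; apply agree_refl|]. apply (agree_le _ _ n); auto.
 pose proof (cnt_le b n); lia. Qed.
Lemma QZ_all b b' : (forall j, QZ b b' j) -> b = b'.
Proof. intro H; apply agree_all; intro n; apply QZ_agree; auto. Qed.

Definition phi (a b : code) : Cplx := (c a, c b).
Definition Sp (P : code -> code -> Prop) : Cplx -> Prop := fun p => exists a b, P a b /\ p = phi a b.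

Lemma phi_inj a b a' b' : phi a b = phi a' b' -> a = a' /\ b = b'.
Proof. unfold phi; intro H; inversion H; split; apply c_inj; auto. Qed.

Lemma cdist_ge1 p q : Rabs (fst p - fst q) <= cdist p q.
Proof. unfold cdist. rewrite <- sqrt_Rsqr_abs. apply sqrt_le_1_alt. rewrite <- !Rsqr_pow2.
 pose proof (Rle_0_sqr (snd p - snd q)); lra. Qed.
Lemma cdist_ge2 p q : Rabs (snd p - snd q) <= cdist p q.
Proof. unfold cdist. rewrite <- sqrt_Rsqr_abs. apply sqrt_le_1_alt. rewrite <- !Rsqr_pow2.
 pose proof (Rle_0_sqr (fst p - fst q)); lra. Qed.
Lemma cdist_le p q : cdist p q <= Rabs (fst p - fst q) + Rabs (snd p - snd q).
Proof.
 unfold cdist. pose proof (Rabs_pos (fst p - fst q)); pose proof (Rabs_pos (snd p - snd q)).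
 rewrite <- (sqrt_Rsqr (Rabs (fst p - fst q) + Rabs (snd p - snd q))) by lra.
 apply sqrt_le_1_alt. rewrite <- !Rsqr_pow2. unfold Rsqr.
 set (x := fst p - fst q) in *; set (y := snd p - snd q) in *.
 assert (x * x = Rabs x * Rabs x) by (rewrite <- Rabs_mult, Rabs_right; [auto|apply Rle_ge; nra]).
 assert (y * y = Rabs y * Rabs y) by (rewrite <- Rabs_mult, Rabs_right; [auto|apply Rle_ge; nra]).
 nra.
Qed.

Lemma open_char P U : open_in (Sp P) U <-> subset U (Sp P) /\
  forall a b, P a b -> U (phi a b) -> exists n, forall a' b', P a' b' ->
    agree a a' n -> agree b b' n -> U (phi a' b').
Proof.
 split.
 - intros [HS HU]; split; auto. intros a b Hab Hx.
   destruct (HU _ Hx) as [eps [He Heps]].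
   destruct (hp_small (eps/2)) as [n Hn]; [lra|]. exists n. intros a' b' H' h1 h2.
   apply Heps. exists a', b'; auto.
   pose proof (cdist_le (phi a b) (phi a' b')). simpl in H.
   pose proof (E1 _ _ _ h1); pose proof (E1 _ _ _ h2); pose proof (pow3_le_hp n). lra.
 - intros [HS HU]; split; auto. intros x Hx. destruct (HS _ Hx) as [a [b [Hab ->]]].
   destruct (HU a b Hab Hx) as [n Hn]. exists ((/3)^n); split; [apply pow3_pos|].
   intros y [a' [b' [H' ->]]] hd. apply Hn; auto.
   + apply NNPP; intro h. pose proof (E2 _ _ _ h). pose proof (cdist_ge1 (phi a b) (phi a' b')). simpl in *; lra.
   + apply NNPP; intro h. pose proof (E2 _ _ _ h). pose proof (cdist_ge2 (phi a b) (phi a' b')). simpl in *; lra.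
Qed.

Lemma closed_char P F : closed_in (Sp P) F <-> subset F (Sp P) /\
  forall a b, P a b -> ~ F (phi a b) -> exists n, forall a' b', P a' b' ->
    agree a a' n -> agree b b' n -> ~ F (phi a' b').
Proof.
 unfold closed_in. rewrite open_char. split.
 - intros [h1 [h2 h3]]; split; auto. intros a b Hab Hn.
   destruct (h3 a b Hab) as [n Hn']. split; [exists a, b; auto|auto].
   exists n; intros; apply Hn'; auto.
 - intros [h1 h2]; split; auto; split. intros x [hx _]; auto.
   intros a b Hab [_ Hn]. destruct (h2 a b Hab Hn) as [n Hn']. exists n; intros; split; auto.
   exists a', b'; auto.
Qed.

Definition cA (p : Cplx) : code := epsilon (inhabits zero) (fun a => c a = fst p).
Definition cB (p : Cplx) : code := epsilon (inhabits zero) (fun a => c a = snd p).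
Lemma cA_phi a b : cA (phi a b) = a.
Proof. apply c_inj. unfold cA. apply (epsilon_spec (inhabits zero) (fun a0 => c a0 = fst (phi a b))). exists a; auto. Qed.
Lemma cB_phi a b : cB (phi a b) = b.
Proof. apply c_inj. unfold cB. apply (epsilon_spec (inhabits zero) (fun a0 => c a0 = snd (phi a b))). exists b; auto. Qed.

Definition d (p q : Cplx) : R := dist (agree (cA p) (cA q)) + dist (QZ (cB p) (cB q)).
Lemma d_phi a b a' b' : d (phi a b) (phi a' b') = dist (agree a a') + dist (QZ b b').
Proof. unfold d; rewrite !cA_phi, !cB_phi; auto. Qed.

Lemma d_metric P : is_metric_on (Sp P) d.
Proof.
 split; [|split; [|split]].
 - intros x y [a [b [_ ->]]] [a' [b' [_ ->]]]. rewrite d_phi.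
   pose proof (dist_nonneg _ (downc_agree a a')); pose proof (dist_nonneg _ (downc_QZ b b')); lra.
 - intros x y [a [b [_ ->]]] [a' [b' [_ ->]]]. rewrite d_phi.
   pose proof (dist_nonneg _ (downc_agree a a')); pose proof (dist_nonneg _ (downc_QZ b b')).
   split; intro Hd.
   + assert (h1 : dist (agree a a') = 0) by lra. assert (h2 : dist (QZ b b') = 0) by lra.
     pose proof (proj1 (dist_zero _ (downc_agree a a')) h1) as g1. pose proof (proj1 (dist_zero _ (downc_QZ b b')) h2) as g2.
     apply agree_all in g1. apply QZ_all in g2. subst; auto.
   + apply phi_inj in Hd; destruct Hd; subst.
     assert (h1 : dist (agree a' a') = 0) by (apply dist_zero; [apply downc_agree|intro; apply agree_refl]).
     assert (h2 : dist (QZ b' b') = 0) by (apply dist_zero; [apply downc_QZ|intro; left; auto]). lra.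
 - intros x y [a [b [_ ->]]] [a' [b' [_ ->]]]. rewrite !d_phi.
   f_equal; apply dist_ext; intro j; split; (apply agree_sym || apply QZ_sym).
 - intros x y z [a [b [_ ->]]] [a' [b' [_ ->]]] [a'' [b'' [_ ->]]]. rewrite !d_phi.
   assert (dist (agree a a'') <= dist (agree a a') + dist (agree a' a'')).
   { apply dist_ultra; try apply downc_agree. intros; eapply agree_trans; eauto. }
   assert (dist (QZ b b'') <= dist (QZ b b') + dist (QZ b' b'')).
   { apply dist_ultra; try apply downc_QZ. intros; eapply QZ_trans; eauto. }
   lra.
Qed.

Lemma d_compat P (HP : forall a b, P a b -> forall j, exists n0, forall a' b', P a' b' -> agree b b' n0 -> QZ b b' j) :
  metric_compatible (Sp P) d.
Proof.
 intros U HU. rewrite open_char. split.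
 - intros [_ H] x Hx. destruct (HU _ Hx) as [a [b [Hab ->]]].
   destruct (H a b Hab Hx) as [n Hn].
   exists (hp (Nat.max n (S (cnt b n)))); split; [apply hp_pos|].
   intros y [a' [b' [H' ->]]] hd. rewrite d_phi in hd.
   pose proof (dist_nonneg _ (downc_agree a a')); pose proof (dist_nonneg _ (downc_QZ b b')).
   apply Hn; auto.
   + apply (agree_le _ _ (Nat.max n (S (cnt b n)))); [|lia]. apply dist_lt; [apply downc_agree|lra].
   + assert (hq : QZ b b' (Nat.max n (S (cnt b n)))) by (apply dist_lt; [apply downc_QZ|lra]).
     destruct hq as [e|[n' [h1 h2]]]; [subst; apply agree_refl|].
     apply (agree_le _ _ n'); auto.
     destruct (Compare_dec.le_lt_dec n n'); auto. pose proof (cnt_mono b n' n). lia.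
 - intro H; split; auto. intros a b Hab Hx.
   destruct (H _ Hx) as [r [Hr Hball]].
   destruct (hp_small (r/2)) as [j Hj]; [lra|].
   destruct (HP a b Hab j) as [n0 Hn0].
   exists (Nat.max j n0). intros a' b' H' h1 h2.
   apply Hball. exists a', b'; auto. rewrite d_phi.
   assert (dist (agree a a') <= hp j) by (apply dist_spec; [apply downc_agree|apply (agree_le _ _ (Nat.max j n0)); auto; lia]).
   assert (dist (QZ b b') <= hp j) by (apply dist_spec; [apply downc_QZ|apply (Hn0 a'); auto; apply (agree_le _ _ (Nat.max j n0)); auto; lia]).
   lra.
Qed.

Fixpoint Mf (N : nat -> nat) (j : nat) : nat :=
  match j with O => N O | S j => Nat.max (Mf N j) (N (S j)) end.
Lemma Mf_ge N j : (N j <= Mf N j)%nat.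
Proof. destruct j; simpl; lia. Qed.
Lemma Mf_mono N i j : (i <= j)%nat -> (Mf N i <= Mf N j)%nat.
Proof. induction 1; simpl; lia. Qed.

Lemma d_complete P (HPc : forall (A Bc : nat -> code) (M : nat -> nat) as_ bs,
   (forall n, P (A n) (Bc n)) -> (forall i j, (i <= j)%nat -> (M i <= M j)%nat) ->
   (forall j m n, (M j <= m)%nat -> (M j <= n)%nat -> QZ (Bc m) (Bc n) j) ->
   (forall j n, (M j <= n)%nat -> agree (Bc n) bs j) ->
   P as_ bs /\ forall j n, (M j <= n)%nat -> QZ (Bc n) bs j) :
  metric_complete (Sp P) d.
Proof.
 intros u Hu Hc.
 set (N := fun j => epsilon (inhabits O) (fun N => forall m n, (m >= N)%nat -> (n >= N)%nat -> d (u m) (u n) < hp j)).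
 assert (HN : forall j m n, (m >= N j)%nat -> (n >= N j)%nat -> d (u m) (u n) < hp j).
 { intro j. apply (epsilon_spec (inhabits O) (fun N => forall m n, (m >= N)%nat -> (n >= N)%nat -> d (u m) (u n) < hp j)).
   apply Hc, hp_pos. }
 set (M := Mf N).
 set (A := fun n => cA (u n)). set (Bc := fun n => cB (u n)).
 assert (Hu' : forall n, P (A n) (Bc n) /\ u n = phi (A n) (Bc n)).
 { intro n. destruct (Hu n) as [a [b [Hab e]]]. unfold A, Bc; rewrite e, cA_phi, cB_phi; auto. }
 assert (Hcc : forall j m n, (M j <= m)%nat -> (M j <= n)%nat -> agree (A m) (A n) j /\ QZ (Bc m) (Bc n) j).
 { intros j m n h1 h2. pose proof (Mf_ge N j).
   assert (hd : d (u m) (u n) < hp j) by (apply HN; unfold M in *; lia).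
   rewrite (proj2 (Hu' m)), (proj2 (Hu' n)), d_phi in hd.
   pose proof (dist_nonneg _ (downc_agree (A m) (A n))); pose proof (dist_nonneg _ (downc_QZ (Bc m) (Bc n))).
   split; apply dist_lt; try apply downc_agree; try apply downc_QZ; lra. }
 set (as_ := fun i => A (M (S i)) i). set (bs := fun i => Bc (M (S i)) i).
 assert (Hmono : forall i j, (i <= j)%nat -> (M i <= M j)%nat) by (intros; apply Mf_mono; auto).
 assert (C1 : forall j n, (M j <= n)%nat -> agree (A n) as_ j /\ agree (Bc n) bs j).
 { intros j n h. split; intros i hi; unfold as_, bs.
   - apply (Hcc (S i)); auto. pose proof (Hmono (S i) j hi); lia.
   - apply QZ_agree with (j := S i); [|lia]. apply Hcc; auto. pose proof (Hmono (S i) j hi); lia. }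
 destruct (HPc A Bc M as_ bs (fun n => proj1 (Hu' n)) Hmono (fun j m n h1 h2 => proj2 (Hcc j m n h1 h2))
   (fun j n h => proj2 (C1 j n h))) as [HP HQ].
 exists (phi as_ bs). split. exists as_, bs; auto.
 intros eps He. destruct (hp_small (eps/2)) as [j Hj]; [lra|]. exists (M j). intros n Hn.
 rewrite (proj2 (Hu' n)), d_phi.
 assert (dist (agree (A n) as_) <= hp j) by (apply dist_spec; [apply downc_agree|apply C1; lia]).
 assert (dist (QZ (Bc n) bs) <= hp j) by (apply dist_spec; [apply downc_QZ|apply HQ; lia]).
 lra.
Qed.

Lemma sep P (E : nat -> code * code) (HE1 : forall m, P (fst (E m)) (snd (E m)))
  (HE2 : forall a b, P a b -> forall n, exists m, agree a (fst (E m)) n /\ agree b (snd (E m)) n) :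
  separable_in (Sp P).
Proof.
 exists (fun m => phi (fst (E m)) (snd (E m))). split.
 - intro m; exists (fst (E m)), (snd (E m)); auto.
 - intros U HU [x Hx]. apply open_char in HU. destruct HU as [HS HU].
   destruct (HS _ Hx) as [a [b [Hab ->]]]. destruct (HU a b Hab Hx) as [n Hn].
   destruct (HE2 a b Hab n) as [m [h1 h2]]. exists m. apply Hn; auto.
Qed.

Definition dec (m : nat) : code := fun k => Nat.testbit m k.
Lemma dec_prefix N : forall t : code, exists m, agree t (dec m) N.
Proof.
 induction N; intro t. exists O; intros k h; lia.
 destruct (IHN (shift t)) as [m Hm].
 destruct (t O) eqn:E.
 - exists (2 * m + 1)%nat. intros [|k] hk; unfold dec.
   + rewrite Nat.testbit_odd_0; auto.
   + rewrite Nat.testbit_odd_succ by lia. apply (Hm k); lia.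
 - exists (2 * m)%nat. intros [|k] hk; unfold dec.
   + rewrite Nat.testbit_even_0; auto.
   + rewrite Nat.testbit_even_succ by lia. apply (Hm k); lia.
Qed.

Definition PX (a b : code) : Prop := inf b.
Definition PY (a b : code) : Prop := b = zero.

Lemma cnt_tail b K : (forall k, (K <= k)%nat -> b k = true) -> forall j, (j <= cnt b (K + j))%nat.
Proof. intros H j; induction j. lia. rewrite Nat.add_succ_r; simpl. rewrite H by lia. lia. Qed.

Lemma polish_X : polish (Sp PX).
Proof.
 split.
 - set (E := fun m => let (x, y) := Cantor.of_nat m in let (z, K) := Cantor.of_nat y in
              (dec x, fun k => if Nat.ltb k K then dec z k else true)).
   apply (sep PX E).
   + intros m. unfold E. destruct (Cantor.of_nat m) as [x y]. destruct (Cantor.of_nat y) as [z K].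
     simpl. intro j. exists (K + j)%nat. apply cnt_tail. intros k hk.
     destruct (Nat.ltb_spec k K); auto; lia.
   + intros a b _ n. destruct (dec_prefix n a) as [x hx]. destruct (dec_prefix n b) as [z hz].
     exists (Cantor.to_nat (x, Cantor.to_nat (z, n))). unfold E.
     rewrite !Cantor.cancel_of_to. simpl. split; auto.
     intros k hk. destruct (Nat.ltb_spec k n); [apply hz; auto|lia].
 - exists d. split; [apply d_metric|split].
   + apply d_compat. intros a b Hb j. destruct (Hb j) as [n0 hn0]. exists n0.
     intros a' b' _ h. right; exists n0; auto.
   + apply d_complete. intros A Bc M as_ bs HP Hmono HQ Hag.
     assert (HQ2 : forall j n, (M j <= n)%nat -> QZ (Bc n) bs j).
     { intros j n hn. apply QZ_trans with (Bc (M j)); [apply HQ; lia|].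
       destruct (HP (M j) j) as [n0 hn0].
       set (m'' := Nat.max (M j) (M n0)).
       assert (ha : agree (Bc m'') bs n0) by (apply Hag; lia).
       destruct (HQ j (M j) m'' (le_n _) ltac:(lia)) as [e|[n' [h1 h2]]].
       - right; exists n0; split; auto. rewrite e; auto.
       - right; exists (Nat.min n0 n'); split.
         + destruct (Nat.le_ge_cases n0 n'); [rewrite Nat.min_l|rewrite Nat.min_r]; auto.
         + apply agree_trans with (Bc m''); [apply (agree_le _ _ n')|apply (agree_le _ _ n0)]; auto; lia. }
     split; auto.
     intro j. destruct (HQ2 j (M j) (le_n _)) as [e|[n [h1 h2]]].
     * rewrite <- e. exact (HP (M j) j).
     * exists n. rewrite <- (agree_cnt _ _ _ h2); auto.
Qed.

Lemma polish_Y : polish (Sp PY).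
Proof.
 split.
 - apply (sep PY (fun m => (dec m, zero))).
   + intros m; reflexivity.
   + intros a b Hb n. destruct (dec_prefix n a) as [x hx]. exists x; split; auto. rewrite Hb; apply agree_refl.
 - exists d. split; [apply d_metric|split].
   + apply d_compat. intros a b Hb j. exists O. intros a' b' Hb' _. left; congruence.
   + apply d_complete. intros A Bc M as_ bs HP Hmono HQ Hag.
     assert (bs = zero).
     { apply agree_all; intro n. rewrite <- (HP (M n)). apply agree_sym, Hag; lia. }
     split; auto. intros j n _. left; rewrite HP; auto.
Qed.

Definition fmap (p : Cplx) : Cplx := (fst p, 0).
Lemma f_phi a b : fmap (phi a b) = phi a zero.
Proof. unfold fmap, phi; simpl; rewrite c_zero; auto. Qed.

Definition cyl (P : code -> code -> Prop) (a0 b0 : code) (n : nat) : Cplx -> Prop :=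
  fun p => exists a b, P a b /\ p = phi a b /\ agree a0 a n /\ agree b0 b n.

Lemma cyl_open P a0 b0 n : open_in (Sp P) (cyl P a0 b0 n).
Proof.
 apply open_char; split.
 - intros p [a [b [h [e _]]]]; exists a, b; auto.
 - intros a b Hab [a1 [b1 [_ [e [h1 h2]]]]]. apply phi_inj in e; destruct e; subst.
   exists n. intros a' b' H' g1 g2. exists a', b'; split; [auto|split; [auto|split; eapply agree_trans; eauto]].
Qed.

Lemma cyl_clopen P a0 b0 n : clopen_in (Sp P) (cyl P a0 b0 n).
Proof.
 split; [apply cyl_open|]. apply closed_char; split.
 - intros p [a [b [h [e _]]]]; exists a, b; auto.
 - intros a b Hab Hn. exists n. intros a' b' H' g1 g2 [a1 [b1 [_ [e [h1 h2]]]]].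
   apply phi_inj in e; destruct e; subst. apply Hn. exists a, b; repeat split; auto.
   + apply agree_trans with a1; auto. apply agree_sym; auto.
   + apply agree_trans with b1; auto. apply agree_sym; auto.
Qed.

Lemma image_cyl a0 b0 n : image fmap (cyl PX a0 b0 n) = cyl PY a0 zero n.
Proof.
 apply functional_extensionality; intro p; apply propositional_extensionality; split.
 - intros [x [[a [b [_ [-> [h1 _]]]]] <-]]. rewrite f_phi. exists a, zero; repeat split; auto.
 - intros [a [b [Hb [-> [h1 _]]]]]. unfold PY in Hb; subst.
   exists (phi a (fun k => if Nat.ltb k n then b0 k else true)). split; [|apply f_phi].
   exists a, (fun k => if Nat.ltb k n then b0 k else true); repeat split; auto.
   + intro j. exists (n + j)%nat. apply cnt_tail. intros k hk. destruct (Nat.ltb_spec k n); auto; lia.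
   + intros k hk. destruct (Nat.ltb_spec k n); auto; lia.
Qed.

Lemma cnt_le_pt a b n : (forall k, b k = true -> a k = true) -> (cnt b n <= cnt a n)%nat.
Proof. intro H; induction n; simpl; auto. destruct (b n) eqn:E. rewrite (H n E); lia. destruct (a n); lia. Qed.

Lemma cnt_fin a l : (forall k, (l <= k)%nat -> a k = false) -> forall m, (cnt a m <= cnt a l)%nat.
Proof.
 intros H m. destruct (Nat.le_ge_cases m l). apply cnt_mono; auto.
 induction H0; auto. simpl. rewrite H by lia. lia.
Qed.

Definition Fset : Cplx -> Prop := fun p => exists a b, inf b /\ p = phi a b /\ forall k, b k = true -> a k = true.

Lemma imF_inf a : image fmap Fset (phi a zero) -> inf a.
Proof.
 intros [x [[a1 [b1 [Hb [-> H]]]] e]]. rewrite f_phi in e. apply phi_inj in e; destruct e; subst.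
 intro j. destruct (Hb j) as [n hn]. exists n. pose proof (cnt_le_pt a b1 n H). lia.
Qed.

Lemma inf_imF a : inf a -> image fmap Fset (phi a zero).
Proof. intro H. exists (phi a a). split; [|apply f_phi]. exists a, a; auto. Qed.

Definition Valid (n : nat) (s : code * nat) : Prop :=
  (forall k, (snd s <= k)%nat -> fst s k = false) /\ (n <= cnt (fst s) (snd s))%nat.

Section Baire.
Variable Fn : nat -> Cplx -> Prop.
Hypothesis HFc : forall n, closed_in (Sp PY) (Fn n).
Hypothesis HFeq : forall x, image fmap Fset x <-> exists n, Fn n x.

Definition Spec (n : nat) (s s' : code * nat) : Prop :=
  Valid (S n) s' /\ (snd s < snd s')%nat /\ agree (fst s) (fst s') (snd s) /\
  forall x, agree (fst s') x (snd s') -> ~ Fn n (phi x zero).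

Lemma step n s : Valid n s -> exists s', Spec n s s'.
Proof.
 destruct s as [a l]. intros [H1 H2]; simpl in *.
 assert (Hni : ~ Fn n (phi a zero)).
 { intro h. assert (image fmap Fset (phi a zero)) by (apply HFeq; eauto).
   apply imF_inf in H. destruct (H (S (cnt a l))) as [m hm]. pose proof (cnt_fin a l H1 m). lia. }
 destruct (proj1 (closed_char _ _) (HFc n)) as [_ Hc].
 destruct (Hc a zero eq_refl Hni) as [m Hm].
 set (p := Nat.max m l).
 set (a' := fun k => if Nat.eqb k p then true else a k).
 assert (Hag : agree a a' p).
 { intros k hk. unfold a'. destruct (Nat.eqb_spec k p); auto; lia. }
 exists (a', S p). repeat split; simpl.
 - intros k hk. unfold a'. destruct (Nat.eqb_spec k p); [lia|]. apply H1; lia.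
 - rewrite <- (agree_cnt _ _ _ Hag). unfold a'. rewrite Nat.eqb_refl.
   pose proof (cnt_mono a l p ltac:(lia)). lia.
 - lia.
 - apply (agree_le _ _ p); auto; lia.
 - intros x hx. apply Hm; [reflexivity| |apply agree_refl].
   intros k hk. rewrite (Hag k) by lia. apply hx; lia.
Qed.

Definition stepf (n : nat) (s : code * nat) : code * nat :=
  epsilon (inhabits (zero, O)) (fun s' => Spec n s s').

Fixpoint st (n : nat) : code * nat :=
  match n with O => (zero, O) | S n => stepf n (st n) end.

Lemma st_spec n : Valid n (st n) /\ Spec n (st n) (st (S n)).
Proof.
 assert (H : forall n, Valid n (st n)).
 { induction n0. split; simpl; auto; lia.
   simpl. apply (epsilon_spec (inhabits (zero, O)) (fun s' => Spec n0 (st n0) s')). apply step; auto. }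
 split; auto. simpl. apply (epsilon_spec (inhabits (zero, O)) (fun s' => Spec n (st n) s')). apply step; auto.
Qed.

Definition L n := snd (st n).
Lemma L_ge n : (n <= L n)%nat.
Proof. induction n; unfold L in *; [lia|]. destruct (st_spec n) as [_ [_ [h _]]]. lia. Qed.
Lemma L_mono p q : (p <= q)%nat -> (L p <= L q)%nat.
Proof. induction 1; auto. destruct (st_spec m) as [_ [_ [h _]]]. unfold L in *; lia. Qed.
Lemma st_agree p q : (p <= q)%nat -> agree (fst (st p)) (fst (st q)) (L p).
Proof.
 induction 1. apply agree_refl.
 destruct (st_spec m) as [_ [_ [_ [h _]]]]. apply agree_trans with (fst (st m)); auto.
 apply (agree_le _ _ (L m)); auto. apply L_mono; auto.
Qed.

Definition alim : code := fun i => fst (st (S i)) i.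
Lemma alim_agree n : agree (fst (st n)) alim (L n).
Proof.
 intros i hi. unfold alim. destruct (Nat.le_ge_cases (S i) n).
 - symmetry. apply (st_agree _ _ H). pose proof (L_ge (S i)); lia.
 - apply (st_agree _ _ H); auto.
Qed.

Lemma baire_contra : False.
Proof.
 assert (Hinf : inf alim).
 { intro j. exists (L j). rewrite <- (agree_cnt _ _ _ (alim_agree j)). apply (st_spec j). }
 destruct (proj1 (HFeq _) (inf_imF _ Hinf)) as [n Hn].
 destruct (st_spec n) as [_ [_ [_ [_ h]]]]. apply (h alim); auto. apply alim_agree.
Qed.
End Baire.

Theorem mainTheorem4 :
  exists (IX IY : Cplx -> Prop) (Bs : (Cplx -> Prop) -> Prop) (f : Cplx -> Cplx),
    polish IX /\ polish IY /\
    is_base IX Bs /\ (forall B, Bs B -> clopen_in IX B) /\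
    maps_into f IX IY /\ continuous_on f IX IY /\ open_map_on f IX IY /\
    surjective_onto f IX IY /\
    (forall B, Bs B -> clopen_in IY (image f B)) /\
    exists F, closed_in IX F /\ ~ Fsigma_in IY (image f F).
Proof.
 exists (Sp PX), (Sp PY), (fun B => exists a0 b0 n, B = cyl PX a0 b0 n), fmap.
 split; [apply polish_X|]. split; [apply polish_Y|].
 split; [split|].
 { intros B [a0 [b0 [n ->]]]. apply cyl_open. }
 { intros U x HU Hx. apply open_char in HU. destruct HU as [HS HU].
   destruct (HS _ Hx) as [a [b [Hab ->]]]. destruct (HU a b Hab Hx) as [n Hn].
   exists (cyl PX a b n). split; [eauto|split].
   - exists a, b; repeat split; auto; apply agree_refl.
   - intros p [a' [b' [H' [-> [h1 h2]]]]]. apply Hn; auto. }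
 split. { intros B [a0 [b0 [n ->]]]. apply cyl_clopen. }
 split. { intros x [a [b [Hb ->]]]. rewrite f_phi. exists a, zero; split; reflexivity. }
 split.
 { intros V HV. apply open_char in HV. destruct HV as [_ HV]. apply open_char; split.
   - intros x [h _]; auto.
   - intros a b Hb [_ Hv]. rewrite f_phi in Hv. destruct (HV a zero eq_refl Hv) as [n Hn].
     exists n. intros a' b' H' g1 g2. split; [exists a', b'; auto|]. rewrite f_phi.
     apply Hn; auto. reflexivity. apply agree_refl. }
 split.
 { intros U HU. apply open_char in HU. destruct HU as [HS HU]. apply open_char; split.
   - intros y [x [Hx <-]]. destruct (HS _ Hx) as [a [b [_ ->]]]. rewrite f_phi. exists a, zero; split; reflexivity.
   - intros a b Hb [x [Hx e]]. unfold PY in Hb; subst b.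
     destruct (HS _ Hx) as [a1 [b1 [Hb1 ->]]]. rewrite f_phi in e. apply phi_inj in e; destruct e; subst a1.
     destruct (HU a b1 Hb1 Hx) as [n Hn]. exists n. intros a' b' H' g1 g2. unfold PY in H'; subst b'.
     exists (phi a' b1). split; [apply Hn; auto; apply agree_refl|apply f_phi]. }
 split.
 { intros y [a [b [Hb ->]]]. unfold PY in Hb; subst b. exists (phi a (fun _ => true)). split; [|apply f_phi].
   exists a, (fun _ => true); split; auto. intro j. exists (0 + j)%nat. apply cnt_tail; auto. }
 split. { intros B [a0 [b0 [n ->]]]. rewrite image_cyl. apply cyl_clopen. }
 exists Fset. split.
 - apply closed_char; split.
   + intros p [a [b [Hb [-> _]]]]; exists a, b; auto.
   + intros a b Hb Hn.
     assert (ex : exists k, b k = true /\ a k = false).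
     { apply NNPP; intro h. apply Hn. exists a, b; repeat split; auto. intros k hk.
       destruct (a k) eqn:E; auto. exfalso; apply h; eauto. }
     destruct ex as [k [h1 h2]]. exists (S k). intros a' b' H' g1 g2 [a1 [b1 [_ [e h]]]].
     apply phi_inj in e; destruct e; subst a1 b1.
     assert (hb : b' k = true) by (rewrite <- (g2 k) by lia; auto).
     specialize (h k hb). rewrite <- (g1 k) in h by lia. congruence.
 - intros [Fn [HFc HFeq]]. exact (baire_contra Fn HFc HFeq).
Qed.
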